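(* Let $X\in\mathbb{R}^{n\times r}$ have linearly independent columns and let $A\in\mathbb{R}^{r\times r}$ be skewsymmetric. Let $Y$ be the random subset of $\{1,\dots,n\}$ with law $$\mathbb{P}(Y=\mathtt{C})=\frac{\det\begin{bmatrix}0_{|\mathtt{C}|}&X_{\mathtt{C}:}\\-(X_{\mathtt{C}:})^\top&A\end{bmatrix}}{\det(A+X^\top X)}.$$ Equivalently, $Y$ is the DPP with correlation kernel $K=X(A+X^\top X)^{-1}X^\top$. Let $\pm\mathrm{i}\nu_1,\dots,\pm\mathrm{i}\nu_k$, with $\nu_\ell$ real, be the paired eigenvalues of $S=(X^\top X)^{-1/2}A(X^\top X)^{-1/2}$ in its Youla decomposition; when $r$ is odd there is one additional unpaired eigenvalue $0$. If $r=2k+1$, then $|Y|$ has the same law as $$1+2\sum_{\ell=1}^k B_\ell,$$ where $B_1,\dots,B_k$ are independent Bernoulli random variables and $B_\ell$ has success probability $1/(1+\nu_\ell^2)$. If $r=2k$, then $|Y|$ has the law of $2\sum_{\ell=1}^kB_\ell$.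
   Context: $X_{\mathtt{C}:}$ is the submatrix of $X$ with rows indexed by $\mathtt{C}$ in increasing order. $0_m$ is the $m\times m$ zero matrix. The Youla decomposition of a real skewsymmetric $r\times r$ matrix $S$ writes its spectrum as conjugate pairs $\pm\mathrm{i}\nu_\ell$, $\ell=1,\dots,\lfloor r/2\rfloor$, plus one additional eigenvalue $0$ if $r$ is odd, with orthonormal eigenvectors $u_\ell,\bar u_\ell$ (and $v_0$). *)

(* Defs.v *)
From HB Require Import structures.
From mathcomp Require Import all_boot all_order all_algebra.
From mathcomp Require Import reals.
Set Implicit Arguments. Unset Strict Implicit. Unset Printing Implicit Defensive.
Import Order.TTheory GRing.Theory Num.Theory.
Local Open Scope ring_scope.

Definition rows_of (R : Type) (n r : nat) (X : 'M[R]_(n, r)) (C : {set 'I_n})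
  : 'M[R]_(#|C|, r) :=
  \matrix_(i < #|C|, j < r) X (enum_val i) j.

Definition dpp_block (R : realType) (n r : nat) (X : 'M[R]_(n, r)) (A : 'M[R]_r)
  (C : {set 'I_n}) : 'M[R]_(#|C| + r) :=
  block_mx (0 : 'M[R]_(#|C|, #|C|)) (rows_of X C) (- (rows_of X C)^T) A.

Definition dpp_prob (R : realType) (n r : nat) (X : 'M[R]_(n, r)) (A : 'M[R]_r)
  (C : {set 'I_n}) : R :=
  \det (dpp_block X A C) / \det (A + X^T *m X).

(* Law of c + 2 * sum_l B_l, where B_l are independent Bernoulli(p l):
   P(c + 2 * sum B = m) = sum over the set S of indices with B_l = 1. *)
Definition bern_affine_law (R : realType) (k : nat) (c : nat) (p : 'I_k -> R)
  (m : nat) : R :=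
  \sum_(S : {set 'I_k} | (c + 2 * #|S|)%N == m)
     (\prod_(l in S) p l) * (\prod_(l in ~: S) (1 - p l)).

Definition sym_posdef (R : realType) (r : nat) (Q : 'M[R]_r) : Prop :=
  Q^T = Q /\ forall v : 'rV[R]_r, v != 0 -> 0 < (v *m Q *m v^T) 0 0.

(* Main.v *)
Require Import Defs.
From HB Require Import structures.
From mathcomp Require Import all_boot all_order all_algebra all_fingroup.
Set Implicit Arguments. Unset Strict Implicit. Unset Printing Implicit Defensive.
Import Order.TTheory GRing.Theory Num.Theory.
Local Open Scope ring_scope.

Lemma split_l m n (a : 'I_m) : split (lshift n a) = inl a.
Proof. exact: (unsplitK (inl a)). Qed.
Lemma split_r m n (b : 'I_n) : split (rshift m b) = inr b.
Proof. exact: (unsplitK (inr b)). Qed.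
Lemma ordP m n (i : 'I_(m + n)) : (exists a, i = lshift n a) \/ (exists b, i = rshift m b).
Proof. by rewrite -[i]splitK; case: (split i) => [a|b]; [left|right]; eexists. Qed.

Lemma ulE (T : Type) m1 m2 n1 n2 (M : 'M[T]_(m1 + m2, n1 + n2)) i j :
  ulsubmx M i j = M (lshift m2 i) (lshift n2 j).
Proof. by rewrite !mxE. Qed.
Lemma urE (T : Type) m1 m2 n1 n2 (M : 'M[T]_(m1 + m2, n1 + n2)) i j :
  ursubmx M i j = M (lshift m2 i) (rshift n1 j).
Proof. by rewrite !mxE. Qed.
Lemma drE (T : Type) m1 m2 n1 n2 (M : 'M[T]_(m1 + m2, n1 + n2)) i j :
  drsubmx M i j = M (rshift m1 i) (rshift n1 j).
Proof. by rewrite !mxE. Qed.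

Section KL.
Variable R : comNzRingType.

Lemma det_mxsub_bij k N (M : 'M[R]_N) (f : 'I_k -> 'I_N) :
  injective f -> k = N -> \det (mxsub f f M) = \det M.
Proof.
move=> fi e; subst N.
pose s := perm fi.
have -> : mxsub f f M = perm_mx s *m M *m perm_mx s^-1.
  by rewrite -col_permE -row_permE; apply/matrixP => i j; rewrite !mxE !permE.
rewrite !det_mulmx !det_perm odd_permV mulrAC -signr_addb addbb mul1r //.
Qed.

Definition gblock n r (X : 'M[R]_(n, r)) (A : 'M[R]_r) (C : {set 'I_n}) : 'M[R]_(#|C| + r) :=
  block_mx 0 (rows_of X C) (- (rows_of X C)^T) A.

Variables (n r : nat) (X : 'M[R]_(n, r)) (A : 'M[R]_r) (u : R).

Definition Mbig : 'M[R]_(n + r) := block_mx (1%:M : 'M_n) X (-(u *: X^T)) A.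

Lemma det_Mbig : \det Mbig = \det (A + u *: (X^T *m X)).
Proof.
have -> : Mbig = block_mx 1%:M 0 (-(u *: X^T)) 1%:M *m block_mx 1%:M X 0 (A + u *: (X^T *m X)).
  rewrite mulmx_block ?mul1mx ?mul0mx ?mulmx0 ?mulmx1 ?addr0 ?add0r.
  by rewrite mulNmx -scalemxAl addrC addrK.
by rewrite det_mulmx det_lblock det_ublock !det1 !mul1r.
Qed.

Definition NC (C : {set 'I_n}) : 'M[R]_(n + r) :=
  \matrix_(i, j) match split i with
    | inl a => if a \in C then Mbig i j - (i == j)%:R else (i == j)%:R
    | inr _ => Mbig i j end.

Lemma det_Mbig_exp : \det Mbig = \sum_(C : {set 'I_n}) \det (NC C).
Proof.
rewrite /determinant.
rewrite (eq_bigr (fun s : 'S_(n + r) => (-1) ^+ s *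
   ((\sum_(C : {set 'I_n}) \prod_(i < n)
     (if i \in C then Mbig (lshift r i) (s (lshift r i)) - (lshift r i == s (lshift r i))%:R
      else (lshift r i == s (lshift r i))%:R)) *
    \prod_(j < r) Mbig (rshift n j) (s (rshift n j))))); last first.
  move=> s _; rewrite big_split_ord /=; congr (_ * (_ * _)).
  rewrite -bigA_distr; apply: eq_bigr => i _; by rewrite /= subrK.
under eq_bigr do rewrite mulr_suml mulr_sumr.
rewrite exchange_big /=; apply: eq_bigr => C _; apply: eq_bigr => s _.
rewrite big_split_ord /=; congr (_ * (_ * _)); apply: eq_bigr => i _; by rewrite [RHS]mxE ?split_l ?split_r.
Qed.


Definition fNC (C : {set 'I_n}) (i : 'I_(#|~: C| + (#|C| + r))) : 'I_(n + r) :=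
  match split i with
  | inl a => lshift r (enum_val a)
  | inr b => match split b with
             | inl c => lshift r (enum_val c)
             | inr j => rshift n j end end.



Lemma fNC_inj (C : {set 'I_n}) : injective (@fNC C).
Proof.
move=> i j; rewrite /fNC.
case: (ordP i) => [][a ->]; rewrite ?split_l ?split_r;
  [|case: (ordP a) => [][c ->]; rewrite ?split_l ?split_r];
case: (ordP j) => [][a' ->]; rewrite ?split_l ?split_r;
  try (case: (ordP a') => [][c' ->]; rewrite ?split_l ?split_r);
  first [ by move/lshift_inj/enum_val_inj ->
        | by move/rshift_inj ->
        | by move/eqP; rewrite ?eq_lrshift ?eq_rlshift
        | match goal with |- lshift _ (enum_val ?x) = lshift _ (enum_val ?y) -> _ =>
            move/lshift_inj => e; move: (enum_valP x) (enum_valP y);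
            rewrite e !in_setC; by case: (enum_val y \in C) end ].
Qed.


Lemma gblock_scale (C : {set 'I_n}) :
  block_mx 0 (rows_of X C) (-(u *: (rows_of X C)^T)) A
  = gblock X A C *m block_mx (u%:M : 'M_#|C|) 0 0 (1%:M : 'M_r).
Proof.
rewrite mulmx_block ?mul1mx ?mul0mx ?mulmx0 ?mulmx1 ?addr0 ?add0r.
by rewrite mulNmx mul_mx_scalar.
Qed.

Lemma NC_lin (C : {set 'I_n}) a j : a \in C ->
  NC C (lshift r a) j = Mbig (lshift r a) j - (lshift r a == j)%:R.
Proof. by move=> aC; rewrite [LHS]mxE split_l aC. Qed.
Lemma NC_lout (C : {set 'I_n}) a j : a \notin C ->
  NC C (lshift r a) j = (lshift r a == j)%:R.
Proof. by move=> aC; rewrite [LHS]mxE split_l (negbTE aC). Qed.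
Lemma NC_r (C : {set 'I_n}) b j : NC C (rshift n b) j = Mbig (rshift n b) j.
Proof. by rewrite [LHS]mxE split_r. Qed.
Lemma Mbig_ll a b : Mbig (lshift r a) (lshift r b) = (a == b)%:R.
Proof. by rewrite /Mbig block_mxEul mxE. Qed.
Lemma Mbig_lr a b : Mbig (lshift r a) (rshift n b) = X a b.
Proof. by rewrite /Mbig block_mxEur. Qed.
Lemma Mbig_rl a b : Mbig (rshift n a) (lshift r b) = - (u * X b a).
Proof. by rewrite /Mbig block_mxEdl !mxE. Qed.
Lemma Mbig_rr a b : Mbig (rshift n a) (rshift n b) = A a b.
Proof. by rewrite /Mbig block_mxEdr. Qed.
Lemma fNC_l (C : {set 'I_n}) a : @fNC C (lshift _ a) = lshift r (enum_val a).
Proof. by rewrite /fNC split_l. Qed.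
Lemma fNC_rl (C : {set 'I_n}) a : @fNC C (rshift _ (lshift _ a)) = lshift r (enum_val a).
Proof. by rewrite /fNC split_r split_l. Qed.
Lemma fNC_rr (C : {set 'I_n}) a : @fNC C (rshift _ (rshift _ a)) = rshift n a.
Proof. by rewrite /fNC !split_r. Qed.

Lemma det_NC (C : {set 'I_n}) : \det (NC C) = u ^+ #|C| * \det (gblock X A C).
Proof.
have e : (#|~: C| + (#|C| + r) = n + r)%N.
  by rewrite addnA [(#|~: C| + _)%N]addnC cardsC card_ord.
have enC (a : 'I_#|~: C|) : enum_val a \notin C.
  by have := enum_valP a; rewrite in_setC.
have eC (a : 'I_#|C|) : enum_val a \in C by exact: enum_valP.
rewrite -(det_mxsub_bij (NC C) (@fNC_inj C) e) -[mxsub _ _ _]submxK.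
set M := mxsub _ _ _.
have ME i j : M i j = NC C (@fNC C i) (@fNC C j) by rewrite /M mxE.
have -> : ursubmx M = 0.
  apply/matrixP => i j; rewrite [RHS]mxE ?ulE ?urE ?drE ME fNC_l NC_lout //.
  case: (ordP j) => [][c ->]; rewrite ?fNC_rl ?fNC_rr ?eq_lrshift //.
  rewrite (inj_eq (@lshift_inj _ _)).
  have /negbTE -> // : enum_val i != enum_val c.
  by apply: contraNneq (enC i) => ->; exact: eC c.
have -> : ulsubmx M = 1%:M.
  apply/matrixP => i j; rewrite [RHS]mxE ?ulE ?urE ?drE ME !fNC_l NC_lout // (inj_eq (@lshift_inj _ _)).
  by rewrite (inj_eq enum_val_inj).
have -> : drsubmx M = block_mx 0 (rows_of X C) (-(u *: (rows_of X C)^T)) A.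
  apply/matrixP => i j; rewrite ?ulE ?urE ?drE ME.
  case: (ordP i) => [][a ->]; case: (ordP j) => [][b ->];
    rewrite ?fNC_rl ?fNC_rr ?block_mxEul ?block_mxEur ?block_mxEdl ?block_mxEdr ?NC_lin ?NC_r //
      ?Mbig_ll ?Mbig_lr ?Mbig_rl ?Mbig_rr ?eq_lrshift ?subr0 ?(inj_eq (@lshift_inj _ _)) ?subrr ?mxE //.
rewrite det_lblock det1 mul1r gblock_scale det_mulmx det_ublock det_scalar det1 mulr1.
by rewrite mulrC.
Qed.

End KL.

Lemma KL (R : comNzRingType) n r (X : 'M[R]_(n, r)) (A : 'M[R]_r) (u : R) :
  \sum_(C : {set 'I_n}) u ^+ #|C| * \det (gblock X A C) = \det (A + u *: (X^T *m X)).
Proof. rewrite -det_Mbig det_Mbig_exp; apply: eq_bigr => C _; by rewrite det_NC. Qed.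

From mathcomp Require Import ring lra reals.

Lemma map_gblock (R : comNzRingType) n r (X : 'M[R]_(n, r)) (A : 'M[R]_r) C :
  gblock (map_mx polyC X) (map_mx polyC A) C = map_mx polyC (gblock X A C).
Proof.
rewrite /gblock map_block_mx map_mx0 map_mxN -map_trmx.
have -> // : rows_of (map_mx polyC X) C = map_mx polyC (rows_of X C).
by apply/matrixP => i j; rewrite !mxE.
Qed.

Unset Implicit Arguments.
Set Strict Implicit.

Theorem mainTheorem9 (R : realType) (n r : nat) (X : 'M[R]_(n, r)) (A : 'M[R]_r)
  (Q : 'M[R]_r) (k : nat) (nu : 'I_k -> R) :
  \rank X = r ->
  A^T = - A ->
  sym_posdef Q -> Q *m Q = X^T *m X ->
  k = r./2 ->
  char_poly (invmx Q *m A *m invmx Q)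
    = (\prod_(l < k) ('X ^+ 2 + (nu l ^+ 2)%:P))
      * 'X ^+ odd r ->
  forall m : nat,
    \sum_(C : {set 'I_n} | #|C| == m) dpp_prob X A C
    = bern_affine_law (odd r) (fun l => 1 / (1 + nu l ^+ 2)) m.
Proof.
move=> _ hA [hQt hQpos] hQQ _.
set S := invmx Q *m A *m invmx Q.
move=> hchar m.
have Qu : Q \in unitmx.
  rewrite unitmxE unitfE; apply/negP => /det0P [v v0 vQ].
  by have := hQpos v v0; rewrite vQ mul0mx mxE ltxx.
have ST : S^T = - S.
  by rewrite /S !trmx_mul trmx_inv hQt hA mulNmx mulmxN mulmxA.
have AS : A = Q *m S *m Q.
  by rewrite /S !mulmxA mulmxV // mul1mx -mulmxA mulVmx // mulmx1.
clearbody S.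
have STe i j : S j i = - S i j.
  by have := congr1 (fun M : 'M[R]_r => M i j) ST; rewrite /= !mxE.
set G := _ * _ in hchar.
set dQ := \det Q.
have dQ0 : dQ != 0 by rewrite -unitfE -unitmxE.
pose d C := \det (gblock X A C).
have KLp : \sum_(C : {set 'I_n}) 'X ^+ #|C| * (d C)%:P = (dQ * dQ)%:P * G.
  have := KL (map_mx polyC X) (map_mx polyC A) 'X.
  under eq_bigr do rewrite map_gblock det_map_mx.
  move=> ->.
  rewrite map_trmx -map_mxM -hQQ {1}AS (map_mxM _ (Q *m S) Q) !(map_mxM _ Q _).
  set Qp := map_mx polyC Q; set Sp := map_mx polyC S.
  have -> : Qp *m Sp *m Qp + 'X *: (Qp *m Qp) = Qp *m (Sp + 'X%:M) *m Qp.
    by rewrite mulmxDr mulmxDl mul_mx_scalar scalemxAl.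
  rewrite !det_mulmx.
  have -> : \det (Sp + 'X%:M) = char_poly S.
    rewrite /char_poly /char_poly_mx -det_tr; congr (\det _).
    apply/matrixP => i j; by rewrite !mxE STe polyCN eq_sym addrC.
  by rewrite -hchar polyCM !det_map_mx mulrAC.
have D1 : \det (A + X^T *m X) = \sum_(C : {set 'I_n}) d C.
  have := KL X A 1; rewrite scale1r => <-.
  by apply: eq_bigr => C _; rewrite expr1n mul1r.
have D2 : \sum_(C : {set 'I_n}) d C = dQ * dQ * G.[1].
  have := congr1 (fun p : {poly R} => p.[1]) KLp; rewrite /= horner_sum hornerM hornerC => <-.
  by apply: eq_bigr => C _; rewrite hornerM hornerXn expr1n mul1r hornerC.
have Cm : \sum_(C : {set 'I_n} | #|C| == m) d C = dQ * dQ * G`_m.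
  have := congr1 (fun p : {poly R} => p`_m) KLp; rewrite /= coef_sum coefCM => <-.
  rewrite big_mkcond /=; apply: eq_bigr => C _.
  rewrite mulrC mul_polyC coefZ coefXn eq_sym; case: eqP => _; by rewrite ?mulr1 ?mulr0.
rewrite /dpp_prob (eq_bigr (fun C => d C / \det (A + X^T *m X))) // -mulr_suml Cm D1 D2.
have dQ2 : dQ * dQ != 0 by rewrite mulf_neq0.
rewrite invfM mulrACA divff // mul1r.
pose p l := 1 / (1 + nu l ^+ 2).
have pos l : 0 < 1 + nu l ^+ 2 by have := sqr_ge0 (nu l); lra.
pose H := \prod_(l < k) ((p l)%:P * 'X^2 + (1 - p l)%:P) * 'X^(odd r).
pose c := \prod_(l < k) (1 + nu l ^+ 2).
have GH : G = c%:P * H.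
  rewrite /G /H mulrA; congr (_ * _); rewrite /c rmorph_prod -big_split /=.
  apply: eq_bigr => l _; rewrite mulrDr mulrA -!polyCM /p.
  have ne : 1 + nu l ^+ 2 != 0 by rewrite gt_eqF ?pos.
  have -> : (1 + nu l ^+ 2) * (1 / (1 + nu l ^+ 2)) = 1 by field.
  have -> : (1 + nu l ^+ 2) * (1 - 1 / (1 + nu l ^+ 2)) = nu l ^+ 2 by field.
  by rewrite mul1r.
have H1 : H.[1] = 1.
  rewrite /H hornerM hornerXn expr1n mulr1 horner_prod.
  by apply: big1 => l _; rewrite hornerD hornerM !hornerC hornerXn expr1n mulr1 addrC subrK.
have c0 : c != 0 by rewrite prodf_seq_neq0; apply/allP => l _; rewrite gt_eqF ?pos.
rewrite GH coefCM hornerM hornerC H1 mulr1 mulrC mulKf //.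
rewrite /H /bern_affine_law /= bigA_distr.
rewrite mulr_suml coef_sum [RHS]big_mkcond /=; apply: eq_bigr => T _.
have -> : \prod_(l < k) (if l \in T then (p l)%:P * 'X^2 else (1 - p l)%:P)
   = (\prod_(l in T) p l * \prod_(l in ~: T) (1 - p l))%:P * 'X^(2 * #|T|).
  rewrite (bigID (fun l => l \in T)) /=.
  rewrite (eq_bigr (fun l => (p l)%:P * 'X^2)); last by move=> l ->.
  rewrite [X in _ * X](eq_bigr (fun l => (1 - p l)%:P)); last by move=> l /negbTE ->.
  rewrite big_split /= prodr_const -!rmorph_prod polyCM exprM.
  rewrite [\prod_(i < k | i \notin T) _](eq_bigl (fun l => l \in ~: T)); last by move=> l /=; rewrite in_setC.
  by rewrite mulrAC.
rewrite -mulrA -exprD coefCM coefXn addnC eq_sym.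
by case: ifP => _; rewrite ?mulr1 ?mulr0.
Qed.
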